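(* There is a constant $c>0$ such that for every $n\in\mathbb{N}$ that is a multiple of $7$, $\mathrm{fw}(\mathrm{HWB}_n)\ge 2^{cn}$. In particular, every TDD computing $\mathrm{HWB}_n$ has size at least $2^{cn}$.
   Context: $\mathrm{HWB}_n$ is the Boolean function over $x_1,\dots,x_n$ with $\mathrm{HWB}_n(x_1,\dots,x_n)=1$ iff $x_S=1$ where $S=\sum_{i=1}^n x_i$ (when $S=0$ the value is $0$). A vtree over $X$ is a rooted tree whose internal nodes have exactly two ordered children and whose leaves are labeled bijectively by $X$; $X_t$ is the set of variables below node $t$. For a Boolean function $f$ over $X$, $Y\subseteq X$ and $\tau\in 2^Y$, $f[\tau]$ is the function over $X\setminus Y$ mapping $\sigma$ to $f(\sigma\times\tau)$; $S_t$ is the number of distinct non-trivial (having a model) functions $f[\tau]$ with $\tau\in 2^{X_t}$; $\mathrm{fw}(f)[T]=\max_t S_t$ and $\mathrm{fw}(f)=\min_T \mathrm{fw}(f)[T]$ over all vtrees $T$ over $X$. An nTDD $C=(N,E)$ respecting $T$ has nodes $N=\biguplus_t N_t$ ($t$-nodes); leaf $t$-nodes (leaf labeled $x$) carry a label in $\{x,\neg x,1,0\}$ and compute that literal/constant; an internal $t$-node $g$ with children $t_1,t_2$ has inputs $E(g)\subseteq N_{t_1}\times N_{t_2}$ and computes $f_g=\bigvee_{(g_1,g_2)\in E(g)}(f_{g_1}\wedge f_{g_2})$ over $X_t$; the root-node $\mathrm{out}$ gives the computed function. Size $|C|=\sum_g|E(g)|$. A TDD is an nTDD (respecting some vtree)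 such that for every leaf $t$ labeled $x$, $N_t$ has at most one node labeled $x$, at most one labeled $\neg x$, at most one labeled $1$, and if one is labeled $1$ all others are labeled $0$; and for every internal $t$, distinct $t$-nodes have disjoint input sets. *)

(* Defs.v *)
From mathcomp Require Import all_boot.
From Stdlib Require Import Reals.

Set Implicit Arguments.
Unset Strict Implicit.
Unset Printing Implicit Defensive.

(* Variables x_1..x_n are represented by 'I_n (x_{i+1} <-> i : 'I_n).
   Assignments are {ffun 'I_n -> bool}; a Boolean function over X is
   a map from assignments to bool. *)
Definition assign (n : nat) := {ffun 'I_n -> bool}.
Definition boolfun (n : nat) := assign n -> bool.

(* HWB_n(x) = 1 iff S := sum x_i > 0 and x_S = 1, i.e. variable index S-1. *)
Definition HWB (n : nat) : boolfun n :=
  fun x => [exists i : 'I_n, (i.+1 == \sum_(j < n) nat_of_bool (x j)) && x i].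

Inductive vtree (n : nat) : Type :=
| VLeaf of 'I_n
| VNode of vtree n & vtree n.

Fixpoint vleaves n (t : vtree n) : seq 'I_n :=
  match t with
  | VLeaf x => [:: x]
  | VNode l r => vleaves l ++ vleaves r
  end.

Definition vtree_over n (T : vtree n) : Prop := perm_eq (vleaves T) (enum 'I_n).

Fixpoint subtrees n (t : vtree n) : seq (vtree n) :=
  t :: match t with
       | VLeaf _ => [::]
       | VNode l r => subtrees l ++ subtrees r
       end.

Definition merge n (Y : seq 'I_n) (sigma tau : assign n) : assign n :=
  [ffun i => if i \in Y then tau i else sigma i].

(* f[tau] as a function over X \ Y (represented on full assignments, it
   ignores the values on Y, so equality of these finfuns is equality of
   the functions over X \ Y). *)
Definition subfun n (f : boolfun n) (Y : seq 'I_n) (tau : assign n)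
  : {ffun assign n -> bool} := [ffun sigma => f (merge Y sigma tau)].

Definition S_t n (f : boolfun n) (t : vtree n) : nat :=
  #|[set subfun f (vleaves t) tau | tau : assign n
      & [exists sigma : assign n, subfun f (vleaves t) tau sigma]]|.

Definition fwT n (f : boolfun n) (T : vtree n) : nat :=
  \max_(t <- subtrees T) S_t f t.

Inductive lit := LPos | LNeg | LOne | LZero.

Definition lit_eqb (a b : lit) : bool :=
  match a, b with
  | LPos, LPos | LNeg, LNeg | LOne, LOne | LZero, LZero => true
  | _, _ => false
  end.

(* A circuit following the shape of a vtree.  t-nodes of a leaf t are the
   indices of the label list; t-nodes of an internal t are the indices of
   the list of input sets E(g) (each a list of pairs of child-node indices). *)
Inductive ntdd (n : nat) : Type :=
| TLeaf of 'I_n & seq lit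
| TNode of ntdd n & ntdd n & seq (seq (nat * nat)).

Fixpoint respects n (C : ntdd n) (T : vtree n) : bool :=
  match C, T with
  | TLeaf x _, VLeaf y => x == y
  | TNode C1 C2 _, VNode t1 t2 => respects C1 t1 && respects C2 t2
  | _, _ => false
  end.

Definition nnodes n (C : ntdd n) : nat :=
  match C with TLeaf _ ls => size ls | TNode _ _ gs => size gs end.

Fixpoint wf_ntdd n (C : ntdd n) : Prop :=
  match C with
  | TLeaf _ _ => True
  | TNode C1 C2 gs =>
      wf_ntdd C1 /\ wf_ntdd C2 /\
      (forall E, E \in gs -> uniq E /\
         forall p, p \in E -> p.1 < nnodes C1 /\ p.2 < nnodes C2)
  end.

Definition eval_lit (l : lit) (b : bool) : bool :=
  match l with LPos => b | LNeg => ~~ b | LOne => true | LZero => false end.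

Fixpoint eval_node n (C : ntdd n) (i : nat) (a : assign n) : bool :=
  match C with
  | TLeaf x ls => eval_lit (nth LZero ls i) (a x)
  | TNode C1 C2 gs =>
      has (fun p => eval_node C1 p.1 a && eval_node C2 p.2 a) (nth [::] gs i)
  end.

Fixpoint ntdd_size n (C : ntdd n) : nat :=
  match C with
  | TLeaf _ _ => 0
  | TNode C1 C2 gs => ntdd_size C1 + ntdd_size C2 + sumn (map size gs)
  end.

Fixpoint is_tdd n (C : ntdd n) : Prop :=
  match C with
  | TLeaf _ ls =>
      count (lit_eqb LPos) ls <= 1 /\ count (lit_eqb LNeg) ls <= 1 /\
      count (lit_eqb LOne) ls <= 1 /\
      (has (lit_eqb LOne) ls ->
         forall i, i < size ls -> ~~ lit_eqb (nth LZero ls i) LOne ->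
                   nth LZero ls i = LZero)
  | TNode C1 C2 gs =>
      is_tdd C1 /\ is_tdd C2 /\
      (forall i j, i < size gs -> j < size gs -> i <> j ->
         forall p, p \in nth [::] gs i -> p \notin nth [::] gs j)
  end.

Definition computes n (C : ntdd n) (out : nat) (f : boolfun n) : Prop :=
  out < nnodes C /\ forall a, eval_node C out a = f a.

(* Main.v *)
Require Import Defs.
From mathcomp Require Import all_boot.
From Stdlib Require Import Reals.
From mathcomp Require Import zify.
From Stdlib Require Import Lra.
Set Implicit Arguments. Unset Strict Implicit. Unset Printing Implicit Defensive.

Lemma card_itvP n (P : pred nat) : #|[set i : 'I_n | P i]| = count P (iota 0 n).
Proof.
rewrite cardsE -val_enum_ord count_map.
rewrite cardE /enum_mem size_filter count_filter; apply: eq_count => i.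
by rewrite !inE andbT.
Qed.
Lemma card_itv n a b : b <= n -> #|[set i : 'I_n | a <= i < b]| = b - a.
Proof.
move=> hb; rewrite (card_itvP n (fun i => a <= i < b)).
case: (leqP a b) => hab.
- rewrite -(subnKC hb) iotaD count_cat add0n.
  rewrite -(subnKC hab) iotaD count_cat add0n.
  rewrite (eq_in_count (a1 := fun i => a <= i < a + (b - a)) (a2 := pred0)); last first.
    by move=> i; rewrite mem_iota /=; lia.
  rewrite (eq_in_count (s := iota a (b-a)) (a2 := predT)); last first.
    by move=> i; rewrite mem_iota /=; lia.
  rewrite (eq_in_count (s := iota (a + (b-a)) _) (a2 := pred0)); last first.
    by move=> i; rewrite mem_iota /=; lia.
  by rewrite !count_pred0 count_predT size_iota; lia.
- rewrite (eq_in_count (a2 := pred0)); last by move=> i; rewrite mem_iota /=; lia.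
  by rewrite count_pred0; lia.
Qed.

Lemma exists_sub (T : finType) (A : {set T}) k :
  k <= #|A| -> exists2 B : {set T}, B \subset A & #|B| = k.
Proof.
elim: k => [|k IH] hk; first by exists set0; rewrite ?sub0set ?cards0.
have [B hB cB] := IH (ltnW hk).
have : 0 < #|A :\: B| by rewrite cardsD (setIidPr hB); lia.
case/card_gt0P => x; rewrite inE => /andP[xB xA].
exists (x |: B); first by rewrite subUset sub1set xA hB.
by rewrite cardsU1 xB cB.
Qed.

Lemma exists_sub_in (T : finType) (A : {set T}) z k :
  z \in A -> 0 < k <= #|A| -> exists B : {set T}, [/\ B \subset A, z \in B & #|B| = k].
Proof.
move=> zA /andP[k0 kA].
have : k.-1 <= #|A :\ z| by rewrite (cardsD1 z A) zA in kA; lia.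
case/exists_sub => B hB cB; exists (z |: B); split.
- by rewrite subUset sub1set zA (subset_trans hB) // subD1set.
- by rewrite setU11.
- have zB : z \notin B by apply/negP => /(subsetP hB); rewrite !inE eqxx.
  by rewrite cardsU1 zB cB; lia.
Qed.

Definition ind n (A : {set 'I_n}) : assign n := [ffun i => i \in A].

Lemma sum_ind n (A : {set 'I_n}) : \sum_(j < n) nat_of_bool (ind A j) = #|A|.
Proof.
rewrite -sum1_card [RHS]big_mkcond /=; apply: eq_bigr => j _.
by rewrite ffunE; case: (j \in A).
Qed.

Lemma hwb_read n (A : {set 'I_n}) (i : 'I_n) : i.+1 = #|A| -> HWB (ind A) = (i \in A).
Proof.
move=> hi; rewrite /HWB sum_ind -hi; apply/existsP/idP.
- case=> i0 /andP[/eqP h]; rewrite ffunE.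
  by have -> : i0 = i by apply: val_inj; case: h.
- by move=> iA; exists i; rewrite eqxx ffunE iA.
Qed.

Lemma merge_ind n (Y : seq 'I_n) (T S : {set 'I_n}) :
  (forall i, i \in T -> i \in Y) -> (forall i, i \in S -> i \notin Y) ->
  Defs.merge Y (ind S) (ind T) = ind (T :|: S).
Proof.
move=> hT hS; apply/ffunP => i; rewrite !ffunE inE.
move: (hT i) (hS i); case: (i \in Y); case: (i \in T); case: (i \in S) => //= h1 h2.
all: try by move: (h2 isT).
all: by move: (h1 isT).
Qed.

Lemma cardsU_disj (T : finType) (A B : {set T}) :
  (forall x, x \in A -> x \notin B) -> #|A :|: B| = #|A| + #|B|.
Proof.
move=> h; rewrite cardsU.
suff -> : A :&: B = set0 by rewrite cards0 subn0.
apply/setP => x; rewrite !inE; apply/negP => /andP[xA xB].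
by move: (h _ xA); rewrite xB.
Qed.

Definition goodfam n (Y : {set 'I_n}) (I : finType) (F : I -> {set 'I_n}) : Prop :=
  [/\ (forall b, F b \subset Y),
      (forall b, exists2 S : {set 'I_n}, S \subset ~: Y & HWB (ind (F b :|: S)))
    & (forall b b', b != b' -> exists2 S : {set 'I_n}, S \subset ~: Y &
          HWB (ind (F b :|: S)) != HWB (ind (F b' :|: S)))].

Lemma read_lemma n (Y A : {set 'I_n}) (x : 'I_n) :
  A \subset Y -> #|A| <= x.+1 <= #|A| + #|~: Y| ->
  exists2 S : {set 'I_n}, S \subset ~: Y & forall B : {set 'I_n}, B \subset Y -> #|B| = #|A| ->
     HWB (ind (B :|: S)) = (x \in B) || (x \in S).
Proof.
move=> AY /andP[h1 h2].
have [S SZ cS] := exists_sub (A := ~: Y) (k := x.+1 - #|A|) ltac:(lia).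
exists S => // B BY cB.
rewrite (@hwb_read _ _ x) ?inE //.
rewrite cardsU_disj ?cB ?cS; first by lia.
move=> y yB; apply/negP => /(subsetP SZ); rewrite inE (subsetP BY) //.
Qed.

Lemma read_Z n (Y A : {set 'I_n}) (z : 'I_n) :
  A \subset Y -> z \notin Y -> #|A| <= z < #|A| + #|~: Y| ->
  exists2 S : {set 'I_n}, S \subset ~: Y & HWB (ind (A :|: S)).
Proof.
move=> AY zY /andP[h1 h2].
have [S [SZ zS cS]] := @exists_sub_in _ (~: Y) z (z.+1 - #|A|) ltac:(by rewrite inE zY) ltac:(by apply/andP; split; lia).
exists S => //.
rewrite (@hwb_read _ _ z) ?inE ?zS ?orbT //.
rewrite cardsU_disj ?cS; first by lia.
move=> y yB; apply/negP => /(subsetP SZ); rewrite inE (subsetP AY) //.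
Qed.

Lemma pair_family n (Y : {set 'I_n}) p (u v : 'I_p -> 'I_n) (Fi : {set 'I_n}) :
  0 < p ->
  (forall j, u j \in Y) -> (forall j, v j \in Y) -> Fi \subset Y ->
  injective u -> injective v -> (forall j k, u j != v k) ->
  (forall j, u j \notin Fi) -> (forall j, v j \notin Fi) ->
  (forall j, #|Fi| + p <= (u j).+1 <= #|Fi| + p + #|~: Y|) ->
  ((forall j, #|Fi| + p <= (v j).+1 <= #|Fi| + p + #|~: Y|) \/
   (exists z : 'I_n, z \notin Y /\ #|Fi| + p <= z < #|Fi| + p + #|~: Y|)) ->
  exists F : {ffun 'I_p -> bool} -> {set 'I_n}, goodfam Y F.
Proof.
move=> p0 uY vY FY uinj vinj uv uF vF uW NT.
pose g (b : {ffun 'I_p -> bool}) j := if b j then u j else v j.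
have ginj b : injective (g b).
  move=> j k; rewrite /g; case: (b j); case: (b k) => // h.
  - exact: uinj.
  - by move: (uv j k); rewrite h eqxx.
  - by move: (uv k j); rewrite h eqxx.
  - exact: vinj.
pose F b := Fi :|: [set g b j | j : 'I_p].
have FsY b : F b \subset Y.
  rewrite subUset FY /=; apply/subsetP => x /imsetP[j _ ->].
  by rewrite /g; case: (b j).
have cF b : #|F b| = #|Fi| + p.
  rewrite cardsU_disj ?card_imset ?card_ord //.
  move=> x xF; apply/negP => /imsetP[j _ e]; move: xF; rewrite e /g.
  by case: (b j); rewrite ?(negbTE (uF j)) ?(negbTE (vF j)).
have memu b j : (u j \in F b) = b j.
  rewrite inE (negbTE (uF j)) /=.
  apply/imsetP/idP.
  - case=> k _; rewrite /g; case bk: (b k) => e.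
    + by move: (uinj _ _ e) => ->.
    + by move: (uv j k); rewrite e eqxx.
  - by move=> bj; exists j => //; rewrite /g bj.
have nS (S : {set 'I_n}) : S \subset ~: Y -> forall x, x \in Y -> (x \in S) = false.
  by move=> SZ x xY; apply/negP => /(subsetP SZ); rewrite inE xY.
exists F; split => //.
- move=> b.
  pose j0 : 'I_p := Ordinal p0.
  case: NT => [vW | [z [zY zW]]].
  + have gW : #|F b| <= (g b j0).+1 <= #|F b| + #|~: Y|.
      by rewrite cF /g; case: (b j0); [apply: uW | apply: vW].
    have gY : g b j0 \in Y by rewrite /g; case: (b j0).
    have [S SZ HS] := read_lemma (FsY b) gW.
    exists S => //; rewrite HS // inE; apply/orP; left; apply/orP; right.
    by apply/imsetP; exists j0.
  + by apply: read_Z (FsY b) zY _; rewrite cF.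
- move=> b b' nb.
  have [j hj] : exists j, b j != b' j.
    apply/existsP; rewrite -negb_forall; apply: contra nb => /forallP h.
    by apply/eqP/ffunP => j; apply/eqP.
  have uW' : #|F b| <= (u j).+1 <= #|F b| + #|~: Y| by rewrite cF; apply: uW.
  have [S SZ HS] := read_lemma (FsY b) uW'.
  exists S => //.
  rewrite !HS ?cF // !memu !(nS S SZ (u j) (uY j)) !orbF //.
Qed.

Lemma eval_local n (s : vtree n) (D : ntdd n) : respects D s ->
  forall a b : assign n, (forall i, i \in vleaves s -> a i = b i) ->
  forall k, eval_node D k a = eval_node D k b.
Proof.
elim: s D => [x|l IHl r IHr] [y ls|C1 C2 gs] //=.
- by move/eqP => -> a b h k; rewrite h // mem_seq1.
- move=> /andP[h1 h2] a b h k; apply: eq_has => q /=.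
  rewrite (IHl _ h1 a b) ?(IHr _ h2 a b) // => i hi; apply: h; rewrite mem_cat hi ?orbT //.
Qed.

Lemma count_le1 (T : Type) (P : pred T) (s : seq T) x0 i j :
  count P s <= 1 -> i < size s -> j < size s ->
  P (nth x0 s i) -> P (nth x0 s j) -> i = j.
Proof.
elim: s i j => [|x s IH] [|i] [|j] //=.
- move=> c _ hj Px Pj.
  have : has P s by apply/(has_nthP x0); exists j.
  by rewrite has_count; move: c; rewrite Px; lia.
- move=> c hi _ Pi Px.
  have : has P s by apply/(has_nthP x0); exists i.
  by rewrite has_count; move: c; rewrite Px; lia.
- move=> c hi hj Pi Pj; congr S; apply: IH hi hj Pi Pj.
  by move: c; case: (P x) => /=; lia.
Qed.

Lemma tdd_unique n (D : ntdd n) : is_tdd D ->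
  forall a i j, eval_node D i a -> eval_node D j a -> i = j.
Proof.
elim: D => [x ls|C1 IH1 C2 IH2 gs] /=.
- move=> [c1 [c2 [c3 c4]]] a i j.
  have hsz k : eval_lit (nth LZero ls k) (a x) -> k < size ls.
    by case: (ltnP k (size ls)) => // hk; rewrite nth_default.
  move=> hi hj; have si := hsz _ hi; have sj := hsz _ hj.
  have hOne : has (lit_eqb LOne) ls -> forall k, k < size ls ->
      eval_lit (nth LZero ls k) (a x) -> nth LZero ls k = LOne.
    move=> hO k hk; move: (c4 hO k hk).
    by case: (nth LZero ls k) => //= /(_ isT).
  case: (boolP (has (lit_eqb LOne) ls)) => hO.
    by apply: (@count_le1 _ (lit_eqb LOne) ls LZero i j) => //;
      rewrite ?(hOne hO i si hi) ?(hOne hO j sj hj).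
  have nO k : k < size ls -> nth LZero ls k <> LOne.
    move=> hk e; move/negP: hO; apply; apply/(has_nthP LZero); by exists k => //; rewrite e.
  move: hi hj (nO i si) (nO j sj).
  case ei: (nth LZero ls i) => //=; case ej: (nth LZero ls j) => //=.
  + by move=> _ _ _ _; apply: (@count_le1 _ (lit_eqb LPos) ls LZero i j) => //; rewrite ?ei ?ej.
  + by move=> ->.
  + by move=> /negbTE ->.
  + by move=> _ _ _ _; apply: (@count_le1 _ (lit_eqb LNeg) ls LZero i j) => //; rewrite ?ei ?ej.
- move=> [t1 [t2 disj]] a i j /hasP[q qi /andP[q1 q2]] /hasP[r rj /andP[r1 r2]].
  have qr : q = r.
    move: (IH1 t1 a _ _ q1 r1) (IH2 t2 a _ _ q2 r2); case: q {qi q1 q2} => ??; case: r {rj r1 r2} => ?? /= -> -> //.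
  subst r.
  case: (eqVneq i j) => // nij.
  have si : i < size gs by case: (ltnP i (size gs)) => // hk; move: qi; rewrite nth_default.
  have sj : j < size gs by case: (ltnP j (size gs)) => // hk; move: rj; rewrite nth_default.
  by move: (disj i j si sj ltac:(by apply/eqP) q qi); rewrite rj.
Qed.

Lemma sub_leaves n (T t : vtree n) : List.In t (subtrees T) ->
  {subset vleaves t <= vleaves T}.
Proof.
elim: T => [x|l IHl r IHr] /=.
- by case=> // <-.
- case=> [<- //|]; rewrite List.in_app_iff => -[h|h] i hi; rewrite mem_cat.
  + by rewrite (IHl h i hi).
  + by rewrite (IHr h i hi) orbT.
Qed.

Lemma ctx n (T : vtree n) (C : ntdd n) t :
  respects C T -> uniq (vleaves T) -> List.In t (subtrees T) ->
  exists Ct, [/\ respects Ct t, (is_tdd C -> is_tdd Ct),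
    ntdd_size Ct <= ntdd_size C,
    (forall a b : assign n, (forall i, i \notin vleaves t -> a i = b i) ->
       (forall k, eval_node Ct k a = eval_node Ct k b) ->
       forall k, eval_node C k a = eval_node C k b) &
    (forall a, (forall k, eval_node Ct k a = false) ->
       forall k, eval_node C k a = false)].
Proof.
elim: T C => [x|l IHl r IHr] C.
- move=> hC _ /= [<-|//]; exists C; split => //.
- case: C => [//|C1 C2 gs] /= /andP[h1 h2] u.
  have ul : uniq (vleaves l) by move: u; rewrite cat_uniq => /andP[].
  have ur : uniq (vleaves r) by move: u; rewrite cat_uniq => /and3P[].
  have dis : forall i, i \in vleaves l -> i \notin vleaves r.
    move=> i il; move: u; rewrite cat_uniq => /and3P[_ /hasPn H _].
    by apply/negP => ir; move: (H i ir); rewrite il.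
  case=> [<-|]; first by exists (TNode C1 C2 gs); split => //=; rewrite ?h1 ?h2.
  rewrite List.in_app_iff => -[ht|ht].
  + have [Ct [r1 r2 r3 r4 r5]] := IHl C1 h1 ul ht.
    exists Ct; split => //.
    * by move=> [? _]; apply: r2.
    * by rewrite /=; lia.
    * move=> a0 b0 hab he k /=; apply: eq_has => q /=.
      rewrite (r4 a0 b0 hab he); congr andb; apply: (eval_local h2) => i ir.
      apply: hab; apply/negP => it; by move: (dis i (sub_leaves ht it)); rewrite ir.
    * move=> a0 hf k /=; apply/hasPn => q _; by rewrite (r5 a0 hf).
  + have [Ct [r1 r2 r3 r4 r5]] := IHr C2 h2 ur ht.
    exists Ct; split => //.
    * by move=> [_ [? _]]; apply: r2.
    * by rewrite /=; lia.
    * move=> a0 b0 hab he k /=; apply: eq_has => q /=.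
      rewrite (r4 a0 b0 hab he); congr andb; apply: (eval_local h1) => i il.
      apply: hab; apply/negP => it; by move: (dis i il); rewrite (sub_leaves ht it).
    * move=> a0 hf k /=; apply/hasPn => q _; by rewrite (r5 a0 hf) andbF.
Qed.

Lemma max_in (A : Type) (F : A -> nat) (s : seq A) x :
  List.In x s -> F x <= \max_(y <- s) F y.
Proof.
elim: s => [//|y s IH] /= [->|h]; rewrite big_cons; first by apply: leq_maxl.
by apply: leq_trans (IH h) (leq_maxr _ _).
Qed.

Lemma card_rel (I K : finType) (J : {set K}) (R : I -> K -> bool) :
  (forall i, exists k, R i k && (k \in J)) ->
  (forall i i' k, R i k -> R i' k -> i = i') -> #|I| <= #|J|.
Proof.
move=> H U.
pose f i := xchoose (H i).
have fR i : R i (f i) && (f i \in J) := xchooseP (H i).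
have finj : injective f.
  move=> i i' e; have /andP[h1 _] := fR i; have /andP[h2 _] := fR i'.
  by apply: (U _ _ (f i)) => //; rewrite e.
rewrite -cardsT -(card_imset _ finj); apply: subset_leq_card.
by apply/subsetP => k /imsetP[i _ ->]; case/andP: (fR i).
Qed.

Lemma cardJ (gs : seq (seq (nat * nat))) :
  #|[set k : 'I_(size gs) | nth [::] gs k != [::]]| <= sumn (map size gs).
Proof.
rewrite -sum1_card big_mkcond /=.
rewrite sumnE big_map (big_nth [::]) big_mkord.
apply: leq_sum => k _; rewrite inE.
by case: (nth [::] gs k).
Qed.

Lemma bound1 n (t : vtree n) (I : finType) (F : I -> {set 'I_n}) :
  goodfam [set i | i \in vleaves t] F -> #|I| <= S_t (@HWB n) t.
Proof.
case=> FY NT DS.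
pose g b := subfun (@HWB n) (vleaves t) (ind (F b)).
have key b (S : {set 'I_n}) : S \subset ~: [set i | i \in vleaves t] ->
    g b (ind S) = HWB (ind (F b :|: S)).
  move=> SZ; rewrite /g /subfun ffunE merge_ind //.
  - by move=> i /(subsetP (FY b)); rewrite inE.
  - by move=> i /(subsetP SZ); rewrite !inE.
have ginj : injective g.
  move=> b b' e; case: (eqVneq b b') => // nb.
  have [S SZ hS] := DS b b' nb.
  by move: hS; rewrite -!key // e eqxx.
rewrite -cardsT -(card_imset _ ginj) /S_t; apply: subset_leq_card.
apply/subsetP => x /imsetP[b _ ->].
have [S SZ hS] := NT b.
apply/imsetP; exists (ind (F b)) => //; rewrite inE; apply/existsP; exists (ind S).
by have := key b S SZ; rewrite /g => ->.
Qed.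

Lemma bound2 n (t : vtree n) (C C1 C2 : ntdd n) gs out (I : finType) (F : I -> {set 'I_n}) :
  goodfam [set i | i \in vleaves t] F ->
  respects (TNode C1 C2 gs) t -> is_tdd (TNode C1 C2 gs) -> computes C out (@HWB n) ->
  (forall a b : assign n, (forall i, i \notin vleaves t -> a i = b i) ->
       (forall k, eval_node (TNode C1 C2 gs) k a = eval_node (TNode C1 C2 gs) k b) ->
       forall k, eval_node C k a = eval_node C k b) ->
  (forall a, (forall k, eval_node (TNode C1 C2 gs) k a = false) ->
       forall k, eval_node C k a = false) ->
  #|I| <= sumn (map size gs).
Proof.
set Ct := TNode C1 C2 gs.
case=> FY NT DS resp tdd [_ comp] K1 K2.
have loc b (S : {set 'I_n}) : S \subset ~: [set i | i \in vleaves t] ->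
    forall k, eval_node Ct k (ind (F b :|: S)) = eval_node Ct k (ind (F b)).
  move=> SZ; apply: (eval_local resp) => i it; rewrite !ffunE inE.
  case iS: (i \in S); last by rewrite orbF.
  by move: (subsetP SZ i iS); rewrite !inE it.
have szk a k : eval_node Ct k a -> k < size gs.
  by case: (ltnP k (size gs)) => // hk; rewrite /Ct /= nth_default.
apply: (leq_trans _ (cardJ gs)).
apply: (@card_rel _ _ _ (fun b (k : 'I_(size gs)) => eval_node Ct k (ind (F b)))).
- move=> b; have [S SZ hS] := NT b.
  case: (boolP [exists k : 'I_(size gs), eval_node Ct k (ind (F b :|: S))]).
  + case/existsP=> k hk; exists k; rewrite -(loc b S SZ) hk inE /=.
    by move: hk; rewrite /Ct /=; case: (nth [::] gs k).
  + move/existsPn => hn.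
    have : eval_node C out (ind (F b :|: S)) = false.
      apply: K2 => k; case: (ltnP k (size gs)) => hk.
      * exact: negbTE (hn (Ordinal hk)).
      * by rewrite /Ct /= nth_default.
    by rewrite comp hS.
- move=> b b' k hb hb'; case: (eqVneq b b') => // nb.
  have [S SZ hS] := DS b b' nb.
  have ev c : eval_node Ct k (ind (F c)) -> forall k', eval_node Ct k' (ind (F c :|: S)) = (k' == k).
    move=> hc k'; rewrite (loc c S SZ); apply/idP/eqP.
    + by move=> hk'; apply: (tdd_unique tdd hk' hc).
    + by move=> ->.
  have := K1 (ind (F b :|: S)) (ind (F b' :|: S)) _ _ out.
  rewrite !comp => e; move: hS; rewrite e ?eqxx //.
  + move=> i it; rewrite !ffunE !inE.
    have iF c : (i \in F c) = false.
      by apply/negP => /(subsetP (FY c)); rewrite inE; apply/negP.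
    by rewrite !iF.
  + by move=> k'; rewrite (ev b hb) (ev b' hb').
Qed.

Lemma cardU_le (T : finType) (A B : {set T}) : #|A :|: B| <= #|A| + #|B|.
Proof. by rewrite cardsU; lia. Qed.

Lemma cardI_le (T : finType) (A B : {set T}) : #|A :&: B| <= #|B|.
Proof. by apply: subset_leq_card; apply: subsetIr. Qed.

Lemma cardYZ n (Y : {set 'I_n}) : #|Y| + #|~: Y| = n.
Proof. by rewrite cardsC card_ord. Qed.

Lemma fam_window n (Y : {set 'I_n}) p s : 0 < p -> p <= s -> s + p <= #|Y| ->
  p + p <= #|Y :&: [set i : 'I_n | s <= i < s + #|~: Y|]| ->
  exists F : {ffun 'I_p -> bool} -> {set 'I_n}, goodfam Y F.
Proof.
move=> p0 ps spy hW.
have [B BW cB] := exists_sub hW.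
have BY : B \subset Y by apply: subset_trans BW (subsetIl _ _).
have BW' : forall x, x \in B -> s <= x < s + #|~: Y|.
  by move=> x /(subsetP BW); rewrite !inE => /andP[_].
have [Fi FiD cFi] : exists2 Fi : {set 'I_n}, Fi \subset Y :\: B & #|Fi| = s - p.
  apply: exists_sub; rewrite cardsD (setIidPr BY) cB; lia.
pose e (i : 'I_(p + p)) : 'I_n := enum_val (cast_ord (esym cB) i).
have einj : injective e.
  by move=> i j /enum_val_inj /cast_ord_inj.
have eB i : e i \in B by apply: enum_valP.
pose u j := e (lshift p j); pose v j := e (rshift p j).
have FiY : Fi \subset Y by apply: subset_trans FiD (subsetDl _ _).
have nF i : e i \notin Fi.
  by apply/negP => /(subsetP FiD); rewrite inE eB.
apply: (@pair_family n Y p u v Fi).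
- exact: p0.
- by move=> j; exact: (subsetP BY _ (eB _)).
- by move=> j; exact: (subsetP BY _ (eB _)).
- exact: FiY.
- by move=> j k /einj /lshift_inj.
- by move=> j k /einj /rshift_inj.
- move=> j k; apply/negP => /eqP /einj /(congr1 val) /=; move: (ltn_ord j); lia.
- by move=> j; apply: nF.
- by move=> j; apply: nF.
- move=> j; rewrite cFi; move: (BW' _ (eB (lshift p j))); rewrite /u; lia.
- left => j; rewrite cFi; move: (BW' _ (eB (rshift p j))); rewrite /v; lia.
Qed.

Lemma fam_big n (Y : {set 'I_n}) p : 0 < p -> 8 * p <= #|Y| ->
  n <= 3 * #|Y| <= 2 * n ->
  exists F : {ffun 'I_p -> bool} -> {set 'I_n}, goodfam Y F.
Proof.
move=> p0 py /andP[h1 h2].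
have ym := cardYZ Y.
set y := #|Y| in py h1 h2 ym *; set m := #|~: Y| in ym *.
pose W s := [set i : 'I_n | s <= i < s + m].
pose s2 := minn (p + m) (y - p).
have cov : Y \subset [set i : 'I_n | 0 <= i < p] :|:
    ((Y :&: W p) :|: (Y :&: W s2) :|: (Y :&: W (y - p))) :|:
    [set i : 'I_n | n - p <= i < n].
  apply/subsetP => i iY; rewrite !inE iY /=; move: (ltn_ord i) => hi.
  rewrite /s2; lia.
have := subset_leq_card cov.
have := cardU_le [set i : 'I_n | 0 <= i < p] ((Y :&: W p) :|: (Y :&: W s2) :|: (Y :&: W (y - p))).
have := cardU_le ([set i : 'I_n | 0 <= i < p] :|: ((Y :&: W p) :|: (Y :&: W s2) :|: (Y :&: W (y - p)))) [set i : 'I_n | n - p <= i < n].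
have := cardU_le ((Y :&: W p) :|: (Y :&: W s2)) (Y :&: W (y - p)).
have := cardU_le (Y :&: W p) (Y :&: W s2).
rewrite !card_itv; try lia.
move=> e1 e2 e3 e4 e5.
have T1 : #|Y| <= p + (#|Y :&: W p| + #|Y :&: W s2| + #|Y :&: W (y-p)|) + p.
  have hp : p <= n by lia.
  apply: (leq_trans e5); apply: (leq_trans e3).
  rewrite (_ : n - (n - p) = p); last by lia.
  rewrite leq_add2r; apply: (leq_trans e4); rewrite subn0 leq_add2l.
  apply: (leq_trans e2); rewrite leq_add2r; exact: e1.
case: (leqP (p + p) #|Y :&: W p|) => c1.
  by apply: (@fam_window n Y p p) => //; lia.
case: (leqP (p + p) #|Y :&: W s2|) => c2.
  by apply: (@fam_window n Y p s2) => //; rewrite /s2; lia.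
have yE : y = #|Y| by [].
apply: (@fam_window n Y p (y - p)) => //; try lia.
change (p + p <= #|Y :&: W (y - p)|); lia.
Qed.

Lemma fam_small n (Y : {set 'I_n}) : 2 <= #|Y| -> 2 <= #|~: Y| ->
  exists F : {ffun 'I_1 -> bool} -> {set 'I_n}, goodfam Y F.
Proof.
move=> y2 m2; have ym := cardYZ Y.
have [u [uY um]] : exists u : 'I_n, u \in Y /\ u <= #|~: Y|.
  case: (boolP [exists u in Y, u <= #|~: Y|]) => [/existsP[u /andP[]]|/existsPn H]; first by eauto.
  have sub : Y \subset [set i : 'I_n | #|~: Y|.+1 <= i < n].
    apply/subsetP => i iY; rewrite inE ltn_ord andbT.
    by move: (H i); rewrite iY /= ltnNge.
  by move: (subset_leq_card sub); rewrite card_itv //; lia.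
have inj1 (f : 'I_1 -> 'I_n) : injective f by move=> j k _; rewrite (ord1 j) (ord1 k).
case: (boolP [exists v in Y, (v != u) && (v <= #|~: Y|)]).
- case/existsP => v /and3P[vY vu vm].
  apply: (@pair_family n Y 1 (fun _ => u) (fun _ => v) set0) => //.
  + by rewrite sub0set.
  + by move=> j k; rewrite eq_sym.
  + by move=> j; rewrite inE.
  + by move=> j; rewrite inE.
  + by move=> j; rewrite cards0 add0n add1n ltnS; exact: um.
  + by left => j; rewrite cards0 add0n add1n ltnS; exact: vm.
- move/existsPn => H.
  have : 0 < #|Y :\ u| by move: y2; rewrite (cardsD1 u Y) uY add1n ltnS.
  case/card_gt0P => v; rewrite !inE => /andP[vu vY].
  have : ~~ ([set i : 'I_n | 1 <= i < #|~: Y|.+1] \subset Y).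
    apply/negP => sub.
    have sub2 : [set i : 'I_n | 1 <= i < #|~: Y|.+1] \subset [set u].
      apply/subsetP => i hi; have iY := subsetP sub i hi.
      move: hi (H i); rewrite !inE iY /= => /andP[_ hi].
      by rewrite ltnS in hi; rewrite hi andbT negbK.
    by move: (subset_leq_card sub2); rewrite card_itv ?cards1; lia.
  case/subsetPn => z; rewrite inE => zI zY.
  apply: (@pair_family n Y 1 (fun _ => u) (fun _ => v) set0) => //.
  + by rewrite sub0set.
  + by move=> j k; rewrite eq_sym.
  + by move=> j; rewrite inE.
  + by move=> j; rewrite inE.
  + by move=> j; rewrite cards0 add0n add1n ltnS; exact: um.
  + by right; exists z; split => //; rewrite cards0 add0n add1n; exact: zI.
Qed.

Lemma sub_uniq n (T t : vtree n) : uniq (vleaves T) -> List.In t (subtrees T) ->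
  uniq (vleaves t).
Proof.
elim: T => [x|l IHl r IHr] /=.
- by move=> _ [<-|].
- move=> u; case=> [<- //|]; rewrite List.in_app_iff => -[h|h].
  + by apply: IHl h; move: u; rewrite cat_uniq => /andP[].
  + by apply: IHr h; move: u; rewrite cat_uniq => /and3P[].
Qed.

Lemma balanced n (T : vtree n) : 2 <= n -> n <= 3 * size (vleaves T) ->
  exists t, List.In t (subtrees T) /\ n <= 3 * size (vleaves t) <= 2 * n.
Proof.
move=> n2; elim: T => [x|l IHl r IHr] /= h.
- by exists (VLeaf x); split; [left | apply/andP; split => //=; lia].
- case: (leqP (3 * size (vleaves l ++ vleaves r)) (2 * n)) => hb.
    by exists (VNode l r); split; [left | rewrite /= h hb].
  rewrite size_cat in h hb.
  case: (leqP (size (vleaves r)) (size (vleaves l))) => c.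
  + have [t [ht1 ht2]] := IHl ltac:(lia).
    by exists t; split => //; right; rewrite List.in_app_iff; left.
  + have [t [ht1 ht2]] := IHr ltac:(lia).
    by exists t; split => //; right; rewrite List.in_app_iff; right.
Qed.

Lemma vtree0 (T : vtree 0) : False.
Proof. by elim: T => [[]|]. Qed.

Definition K n := if n < 48 then 2 else expn 2 (n %/ 24).

Lemma card_I p : #|{ffun 'I_p -> bool}| = expn 2 p.
Proof. by rewrite card_ffun card_bool card_ord. Qed.

Lemma core n (T : vtree n) : 7 <= n -> vtree_over T ->
  exists t l r, [/\ List.In t (subtrees T), t = VNode l r &
    exists (I : finType) (F : I -> {set 'I_n}),
      goodfam [set i | i \in vleaves t] F /\ K n <= #|I|].
Proof.
move=> n7 ov.
have uT : uniq (vleaves T) by rewrite (perm_uniq ov) enum_uniq.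
have sT : size (vleaves T) = n by rewrite (perm_size ov) size_enum_ord.
have [t [ht hb]] := balanced (T := T) ltac:(lia) ltac:(lia).
have ut := sub_uniq uT ht.
have [l [r et]] : exists l r, t = VNode l r.
  by move: hb; case: (t) => [x|l r] /=; [lia | exists l, r].
set Y := [set i | i \in vleaves t].
have cY : #|Y| = size (vleaves t) by rewrite cardsE; apply/card_uniqP.
have ym : #|Y| + #|~: Y| = n by rewrite cardsC card_ord.
exists t, l, r; split => //.
rewrite /K; case: ltnP => hn.
- have t1 : 2 <= #|Y| by lia.
  have t2 : 2 <= #|~: Y| by lia.
  have [F hF] := fam_small t1 t2.
  by exists {ffun 'I_1 -> bool}, F; rewrite card_I.
- have t3 : n %/ 24 * 24 <= n by apply: leq_trunc_div.
  have t4 : 0 < n %/ 24 by rewrite divn_gt0 //; lia.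
  have t5 : 8 * (n %/ 24) <= #|Y| by lia.
  have t6 : n <= 3 * #|Y| <= 2 * n by apply/andP; split; lia.
  have [F hF] := fam_big t4 t5 t6.
  by exists {ffun 'I_(n %/ 24) -> bool}, F; rewrite card_I.
Qed.

Lemma INR_expn k : INR (expn 2 k) = (2 ^ k)%R.
Proof.
elim: k => [|k IH]; first by rewrite expn0.
by rewrite expnS mult_INR IH /=; lra.
Qed.

Lemma real_part n : 0 < n -> (Rpower 2 (/48 * INR n) <= INR (K n))%R.
Proof.
move=> n0; rewrite /K; case: ltnP => hn.
- have h1 : (/48 * INR n <= 1)%R.
    have : (INR n <= INR 48)%R by apply: le_INR; apply/leP; lia.
    have -> : INR 48 = 48%R by simpl; lra.
    lra.
  apply: Rle_trans (Rle_Rpower 2 _ _ _ h1) _; first lra.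
  rewrite Rpower_1; last lra. simpl; lra.
- set k := n %/ 24.
  have hk : n <= 48 * k by rewrite /k; lia.
  have h1 : (/48 * INR n <= INR k)%R.
    have : (INR n <= INR (48 * k))%R by apply: le_INR; apply/leP.
    rewrite mult_INR.
    have -> : INR 48 = 48%R by simpl; lra.
    lra.
  apply: Rle_trans (Rle_Rpower 2 _ _ _ h1) _; first lra.
  rewrite Rpower_pow; last lra.
  by rewrite INR_expn; apply: Rle_refl.
Qed.

Theorem theorem19 :
  exists c : R, (0 < c)%R /\
    forall n : nat, 7 %| n ->
      (forall T : vtree n, vtree_over T ->
         (Rpower 2 (c * INR n) <= INR (fwT (@HWB n) T))%R) /\
      (forall (T : vtree n) (C : ntdd n) (out : nat),
         vtree_over T -> respects C T -> wf_ntdd C -> is_tdd C ->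
         computes C out (@HWB n) ->
         (Rpower 2 (c * INR n) <= INR (ntdd_size C))%R).
Proof.
exists (/48)%R; split; first lra.
move=> n d7.
case: (posnP n) => [n0|n0].
  by subst n; split => T; case: (vtree0 T).
have n7 : 7 <= n by apply: dvdn_leq.
split.
- move=> T ov.
  have [t [l [r [ht et [I [F [hF hK]]]]]]] := core n7 ov.
  apply: Rle_trans (real_part n0) _; apply: le_INR; apply/leP.
  apply: leq_trans hK _; apply: leq_trans (bound1 hF) _.
  exact: (max_in (fun t => S_t (@HWB n) t) ht).
- move=> T C out ov resp _ tdd comp.
  have [t [l [r [ht et [I [F [hF hK]]]]]]] := core n7 ov.
  have uT : uniq (vleaves T) by rewrite (perm_uniq ov) enum_uniq.
  have [Ct [r1 r2 r3 r4 r5]] := ctx resp uT ht.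
  apply: Rle_trans (real_part n0) _; apply: le_INR; apply/leP.
  apply: leq_trans hK _.
  move: r1 r2 r3 r4 r5; rewrite et; case: Ct => [//|C1 C2 gs] r1 r2 r3 r4 r5.
  rewrite -et in r1 r4 hF.
  apply: leq_trans (bound2 hF r1 (r2 tdd) comp r4 r5) _.
  apply: leq_trans r3; rewrite /=; lia.
Qed.
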